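(* (a) Let $(A,\widetilde{A})$ be a dual pair of closed operators on a Hilbert space satisfying the common core property with a common core $\mathcal{D}$, where $A$ is dissipative. Then there exist two symmetric operators $S$ and $V\ge0$ with $\mathcal{D}(S)=\mathcal{D}(V)=\mathcal{D}$ such that $A\upharpoonright_{\mathcal{D}}=S+iV$ and $\widetilde{A}\upharpoonright_{\mathcal{D}}=S-iV$. (b) Conversely, let $A$ be a dissipative operator of the form $A=S+iV$, where $S$ and $V\ge0$ are symmetric operators with $\mathcal{D}(A)=\mathcal{D}(S)=\mathcal{D}(V)=:\mathcal{D}$. Define $\widetilde{A}:=S-iV$ with $\mathcal{D}(\widetilde{A})=\mathcal{D}$. Then the closures $(\overline{A},\overline{\widetilde{A}})$ form a dual pair that has the common core property.
   Context: The inner product is antilinear in the first argument. A densely defined operator $B$ is dissipative if $\mathrm{Im}\langle\psi,B\psi\rangle\ge0$ for all $\psi\in\mathcal{D}(B)$. A pair $(A,\widetilde{A})$ of densely defined closable operators is a dual pair if $A\subset\widetilde{A}^*$ (equivalently $\widetilde{A}\subset A^*$). A dual pair of closed operators has the common core property if there is a subspace $\mathcal{D}\subset\mathcal{D}(A)\cap\mathcal{D}(\widetilde{A})$ with $\overline{A\upharpoonright_{\mathcal{D}}}=A$ and $\overline{\widetilde{A}\upharpoonright_{\mathcal{D}}}=\widetilde{A}$. *)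

(* Defs.v *)
From HB Require Import structures.
From mathcomp Require Import all_boot all_order all_algebra.
From mathcomp Require Import boolp classical_sets reals.
From mathcomp Require Import complex.
Set Implicit Arguments. Unset Strict Implicit. Unset Printing Implicit Defensive.
Import Order.TTheory GRing.Theory Num.Theory.
Local Open Scope ring_scope.
Local Open Scope classical_set_scope.

Record opr (H : Type) := Opr { dom : set H ; app : H -> H }.
Arguments Opr {H}.
Arguments dom {H}.
Arguments app {H}.

Section Hilbert.
Variables (R : realType) (H : lmodType R[i]) (ip : H -> H -> R[i]).

(* inner product, antilinear in the first argument *)
Definition is_inner_product : Prop :=
  (forall (a : R[i]) (x y z : H), ip x (a *: y + z) = a * ip x y + ip x z) /\
  (forall x y : H, ip y x = conjc (ip x y)) /\
  (forall x : H, 0 <= ip x x) /\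
  (forall x : H, ip x x = 0 -> x = 0).

Definition hnorm (x : H) : R := Num.sqrt (complex.Re (ip x x)).

Definition converges (u : nat -> H) (l : H) : Prop :=
  forall e : R, 0 < e -> exists N : nat, forall n : nat, (N <= n)%N ->
    hnorm (u n - l) < e.

Definition cauchy_seq (u : nat -> H) : Prop :=
  forall e : R, 0 < e -> exists N : nat, forall m n : nat,
    (N <= m)%N -> (N <= n)%N -> hnorm (u m - u n) < e.

Definition is_hilbert : Prop :=
  is_inner_product /\ forall u, cauchy_seq u -> exists l, converges u l.

Definition is_subspace (D : set H) : Prop :=
  D 0 /\ forall (a : R[i]) (x y : H), D x -> D y -> D (a *: x + y).

Definition dense_set (D : set H) : Prop :=
  forall (x : H) (e : R), 0 < e -> exists y, D y /\ hnorm (x - y) < e.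

Definition is_operator (T : opr H) : Prop :=
  is_subspace (dom T) /\
  forall (a : R[i]) (x y : H), dom T x -> dom T y ->
    app T (a *: x + y) = a *: app T x + app T y.

Definition densely_defined (T : opr H) : Prop :=
  is_operator T /\ dense_set (dom T).

Definition closed_op (T : opr H) : Prop :=
  is_operator T /\
  forall (u : nat -> H) (x y : H), (forall n, dom T (u n)) ->
    converges u x -> converges (fun n => app T (u n)) y ->
    dom T x /\ app T x = y.

Definition op_incl (A B : opr H) : Prop :=
  (forall x, dom A x -> dom B x) /\ (forall x, dom A x -> app A x = app B x).

Definition op_eq (A B : opr H) : Prop := op_incl A B /\ op_incl B A.

Definition is_closure (A B : opr H) : Prop :=
  closed_op B /\ op_incl A B /\
  forall x, dom B x -> exists u : nat -> H, (forall n, dom A (u n)) /\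
    converges u x /\ converges (fun n => app A (u n)) (app B x).

Definition closable (A : opr H) : Prop := exists B, is_closure A B.

Definition op_restrict (A : opr H) (D : set H) : opr H := Opr D (app A).

(* dual pair: A ⊂ At^*, i.e. <x, At y> = <A x, y> for x ∈ D(A), y ∈ D(At) *)
Definition dual_pair (A At : opr H) : Prop :=
  densely_defined A /\ densely_defined At /\ closable A /\ closable At /\
  forall x y, dom A x -> dom At y -> ip x (app At y) = ip (app A x) y.

Definition common_core (A At : opr H) (D : set H) : Prop :=
  is_subspace D /\ (forall x, D x -> dom A x /\ dom At x) /\
  is_closure (op_restrict A D) A /\ is_closure (op_restrict At D) At.

Definition common_core_property (A At : opr H) : Prop :=
  closed_op A /\ closed_op At /\ exists D, common_core A At D.

Definition dissipative (B : opr H) : Prop :=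
  densely_defined B /\ forall x, dom B x -> 0 <= complex.Im (ip x (app B x)).

Definition symmetric_op (S : opr H) : Prop :=
  densely_defined S /\
  forall x y, dom S x -> dom S y -> ip x (app S y) = ip (app S x) y.

Definition nonneg_op (V : opr H) : Prop :=
  forall x, dom V x -> 0 <= ip x (app V x).

Definition op_plus_iV (D : set H) (S V : opr H) : opr H :=
  Opr D (fun x => app S x + 'i%C *: app V x).
Definition op_minus_iV (D : set H) (S V : opr H) : opr H :=
  Opr D (fun x => app S x - 'i%C *: app V x).

End Hilbert.

(* Main.v *)
Require Import Defs.
From HB Require Import structures.
From mathcomp Require Import all_boot all_order all_algebra.
From mathcomp Require Import boolp classical_sets reals.
From mathcomp Require Import complex.
From mathcomp Require Import ring lra.
Import Order.TTheory GRing.Theory Num.Theory.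
Local Open Scope ring_scope.
Local Open Scope classical_set_scope.
Local Open Scope complex_scope.
Set Implicit Arguments. Unset Strict Implicit. Unset Printing Implicit Defensive.

Section Cplx.
Variable R : realType.
Implicit Types (a b z : R[i]) (t : R).
Lemma ReD a b : complex.Re (a + b) = complex.Re a + complex.Re b.
Proof. by case: a; case: b. Qed.
Lemma ImD a b : complex.Im (a + b) = complex.Im a + complex.Im b.
Proof. by case: a; case: b. Qed.
Lemma ReN a : complex.Re (- a) = - complex.Re a. Proof. by case: a. Qed.
Lemma ImN a : complex.Im (- a) = - complex.Im a. Proof. by case: a. Qed.
Lemma ReM a b : complex.Re (a * b) = complex.Re a * complex.Re b - complex.Im a * complex.Im b.
Proof. by case: a => ? ?; case: b => ? ?. Qed.
Lemma ImM a b : complex.Im (a * b) = complex.Re a * complex.Im b + complex.Im a * complex.Re b.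
Proof. case: a => ? ?; case: b => ? ? /=. ring. Qed.
Lemma ReJ a : complex.Re (conjc a) = complex.Re a. Proof. by case: a. Qed.
Lemma ImJ a : complex.Im (conjc a) = - complex.Im a. Proof. by case: a. Qed.
Lemma conjcD a b : conjc (a + b) = conjc a + conjc b.
Proof. by case: a; case: b => ? ? ? ? /=; rewrite opprD. Qed.
Lemma conjcN a : conjc (- a) = - conjc a.
Proof. by case: a. Qed.
Lemma conjcM a b : conjc (a * b) = conjc a * conjc b.
Proof. case: a; case: b => ? ? ? ? /=; congr Complex; ring. Qed.
Lemma conjcK' a : conjc (conjc a) = a.
Proof. by case: a => ? ? /=; rewrite opprK. Qed.
Lemma conjc0' : conjc (0 : R[i]) = 0.
Proof. by rewrite /= oppr0. Qed.
Lemma cext a b : complex.Re a = complex.Re b -> complex.Im a = complex.Im b -> a = b.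
Proof. by case: a; case: b => ? ? ? ? /= -> ->. Qed.
Lemma ge0_real a : 0 <= a -> a = (complex.Re a)%:C /\ 0 <= complex.Re a.
Proof. case: a => x y; rewrite lecE /= => /andP[/eqP -> h]; by split. Qed.
End Cplx.

Section Basics.
Variables (R : realType) (H : lmodType R[i]) (ip : H -> H -> R[i]).
Hypothesis hip : is_inner_product ip.
Implicit Types (x y z : H) (a : R[i]).

Lemma ipDr x y z : ip x (y + z) = ip x y + ip x z.
Proof. by have := hip.1 1 x y z; rewrite scale1r mul1r. Qed.
Lemma ipr0 x : ip x 0 = 0.
Proof. have h := ipDr x 0 0; rewrite addr0 in h. by apply/(addrI (ip x 0)); rewrite -h addr0. Qed.
Lemma ipZr a x y : ip x (a *: y) = a * ip x y.
Proof. by have := hip.1 a x y 0; rewrite !addr0 ipr0 addr0. Qed.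
Lemma ipNr x y : ip x (- y) = - ip x y.
Proof. by rewrite -scaleN1r ipZr mulN1r. Qed.
Lemma ipBr x y z : ip x (y - z) = ip x y - ip x z.
Proof. by rewrite ipDr ipNr. Qed.
Lemma ipC x y : ip y x = conjc (ip x y).
Proof. exact: hip.2.1. Qed.
Lemma ipDl x y z : ip (x + y) z = ip x z + ip y z.
Proof. by rewrite ipC ipDr conjcD -!ipC. Qed.
Lemma ipZl a x y : ip (a *: x) y = conjc a * ip x y.
Proof. by rewrite ipC ipZr conjcM -ipC. Qed.
Lemma ipNl x y : ip (- x) y = - ip x y.
Proof. by rewrite ipC ipNr conjcN -ipC. Qed.
Lemma ipBl x y z : ip (x - y) z = ip x z - ip y z.
Proof. by rewrite ipDl ipNl. Qed.
Lemma ip0l x : ip 0 x = 0.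
Proof. by rewrite ipC ipr0 conjc0'. Qed.

Definition N2 x := complex.Re (ip x x).
Lemma N2_ge0 x : 0 <= N2 x.
Proof. exact: (ge0_real (hip.2.2.1 x)).2. Qed.
Lemma ipxx x : ip x x = (N2 x)%:C.
Proof. exact: (ge0_real (hip.2.2.1 x)).1. Qed.
Lemma N2_eq0 x : N2 x = 0 -> x = 0.
Proof. by move=> h; apply: hip.2.2.2; rewrite ipxx h. Qed.
Lemma hnorm_sq x : hnorm ip x ^+ 2 = N2 x.
Proof. by rewrite /hnorm sqr_sqrtr // N2_ge0. Qed.
Lemma hnorm_ge0 x : 0 <= hnorm ip x.
Proof. exact: sqrtr_ge0. Qed.
Lemma hnorm_eq0 x : hnorm ip x = 0 -> x = 0.
Proof. by move=> h; apply: N2_eq0; rewrite -hnorm_sq h expr0n. Qed.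
Lemma ReipC x y : complex.Re (ip y x) = complex.Re (ip x y).
Proof. by rewrite ipC ReJ. Qed.
Lemma N2D x y : N2 (x + y) = N2 x + N2 y + 2 * complex.Re (ip x y).
Proof.
rewrite /N2 !ipDl !ipDr !ReD ReipC -/(N2 x) -/(N2 y) /N2. ring.
Qed.
Lemma N2Z a x : N2 (a *: x) = (complex.Re a ^+ 2 + complex.Im a ^+ 2) * N2 x.
Proof.
rewrite /N2 ipZl ipZr mulrA ipxx -/(N2 x) !ReM !ImM !ReJ !ImJ /=. ring.
Qed.
Lemma Re_ipZr t x y : complex.Re (ip x (t%:C *: y)) = t * complex.Re (ip x y).
Proof. by rewrite ipZr ReM /= mul0r subr0. Qed.
Lemma hnormZ a x : hnorm ip (a *: x) = Num.sqrt (complex.Re a ^+ 2 + complex.Im a ^+ 2) * hnorm ip x.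
Proof. by rewrite /hnorm -/(N2 _) N2Z sqrtrM // addr_ge0 // sqr_ge0. Qed.
Lemma hnormN x : hnorm ip (- x) = hnorm ip x.
Proof. by rewrite -scaleN1r hnormZ /= oppr0 expr0n /= addr0 sqrrN expr1n sqrtr1 mul1r. Qed.
Lemma hnorm0 : hnorm ip 0 = 0.
Proof. by rewrite /hnorm ip0l /= sqrtr0. Qed.

Lemma CS x y : complex.Re (ip x y) <= hnorm ip x * hnorm ip y.
Proof.
have Q t : 0 <= N2 x + t ^+ 2 * N2 y - 2 * t * complex.Re (ip x y).
  have := N2_ge0 (x + (- t)%:C *: y).
  rewrite N2D N2Z Re_ipZr /=. set r := complex.Re _. set b := N2 y.
  by rewrite expr0n /= addr0 sqrrN => h; apply: le_trans h _; lra.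
set r := complex.Re _.
have [y0|ypos] := eqVneq (N2 y) 0.
  rewrite /r (N2_eq0 y0) ipr0 /=. by rewrite mulr_ge0 // hnorm_ge0.
have bpos : 0 < N2 y by rewrite lt_def ypos N2_ge0.
have hab : r ^+ 2 <= N2 x * N2 y.
  have := Q (r / N2 y).
  have -> : N2 x + (r / N2 y) ^+ 2 * N2 y - 2 * (r / N2 y) * r = (N2 x * N2 y - r ^+ 2) / N2 y.
    by field; rewrite ypos.
  by rewrite pmulr_lge0 ?invr_gt0 // subr_ge0.
rewrite -!hnorm_sq -exprMn in hab.
have : 0 <= hnorm ip x * hnorm ip y by rewrite mulr_ge0 // hnorm_ge0.
move: hab; set p := hnorm ip x * hnorm ip y. nra.
Qed.

Lemma sq_le (r p : R) : 0 <= p -> r ^+ 2 <= p ^+ 2 -> r <= p.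
Proof. nra. Qed.
Lemma CSabs x y : `|complex.Re (ip x y)| <= hnorm ip x * hnorm ip y.
Proof.
rewrite ler_norml CS andbT.
have := CS x (- y); rewrite ipNr ReN hnormN. lra.
Qed.
Lemma CSIm x y : `|complex.Im (ip x y)| <= hnorm ip x * hnorm ip y.
Proof.
have := CSabs x ((- 'i) *: y).
rewrite ipZr ReM hnormZ /= oppr0 expr0n /= add0r sqrrN expr1n sqrtr1 mul1r.
by rewrite mul0r sub0r mulN1r opprK.
Qed.
Lemma hnormD x y : hnorm ip (x + y) <= hnorm ip x + hnorm ip y.
Proof.
apply: sq_le; first by rewrite addr_ge0 // hnorm_ge0.
rewrite hnorm_sq N2D -!hnorm_sq.
have := CS x y. lra.
Qed.
Lemma hnormB x y : hnorm ip (x - y) = hnorm ip (y - x).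
Proof. by rewrite -hnormN opprB. Qed.

Lemma conv_const x : converges ip (fun _ => x) x.
Proof. by move=> e e0; exists 0%N => n _; rewrite subrr hnorm0. Qed.
Lemma conv_ext (u v : nat -> H) l : (forall n, u n = v n) -> converges ip u l -> converges ip v l.
Proof. by move=> huv hu e e0; have [N hN] := hu e e0; exists N => n hn; rewrite -huv; apply: hN. Qed.
Lemma conv_add (u v : nat -> H) x y : converges ip u x -> converges ip v y ->
  converges ip (fun n => u n + v n) (x + y).
Proof.
move=> hu hv e e0.
have e2 : 0 < e / 2 by rewrite divr_gt0.
have [N1 h1] := hu _ e2; have [N2 h2] := hv _ e2.
exists (maxn N1 N2) => n hn.
have := h1 n (leq_trans (leq_maxl _ _) hn); have := h2 n (leq_trans (leq_maxr _ _) hn).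
have -> : u n + v n - (x + y) = (u n - x) + (v n - y) by rewrite opprD addrACA.
have := hnormD (u n - x) (v n - y). lra.
Qed.
Lemma conv_scale a (u : nat -> H) x : converges ip u x ->
  converges ip (fun n => a *: u n) (a *: x).
Proof.
move=> hu e e0.
set c := Num.sqrt (complex.Re a ^+ 2 + complex.Im a ^+ 2).
have c0 : 0 <= c by apply: sqrtr_ge0.
have e1 : 0 < e / (c + 1) by rewrite divr_gt0 // ltr_wpDl.
have [N hN] := hu _ e1; exists N => n hn.
rewrite -scalerBr hnormZ -/c.
have := hN n hn. set h := hnorm ip _. set e' := e / (c + 1).
have -> : e = (c + 1) * e' by rewrite /e' mulrC divfK // gt_eqF // ltr_wpDl.
have := hnorm_ge0 (u n - x); rewrite -/h. nra.
Qed.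
Lemma small0 (r : R) : (forall e, 0 < e -> `|r| < e) -> r = 0.
Proof.
move=> h; apply/eqP; apply: contraT => hr.
have h0 : 0 < `|r| by rewrite normr_gt0.
by have := h _ h0; rewrite ltxx.
Qed.
Lemma LIM (u v : nat -> H) x y (a b : H) : converges ip u x -> converges ip v y ->
  (forall n, ip a (u n) = ip b (v n)) -> ip a x = ip b y.
Proof.
move=> hu hv huv; apply/eqP; rewrite -subr_eq0; apply/eqP.
set d := ip a x - ip b y.
have hd n : d = ip a (x - u n) - ip b (y - v n).
  by rewrite /d !ipBr huv; ring.
have small : forall e, 0 < e -> exists n,
    hnorm ip a * hnorm ip (x - u n) + hnorm ip b * hnorm ip (y - v n) < e.
  move=> e e0.
  set K := hnorm ip a + hnorm ip b + 1.
  have K0 : 0 < K by rewrite /K ltr_wpDl // addr_ge0 // hnorm_ge0.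
  have e1 : 0 < e / K by rewrite divr_gt0.
  have [N1 h1] := hu _ e1; have [N2 h2] := hv _ e1.
  exists (maxn N1 N2).
  move: (h1 _ (leq_maxl N1 N2)) (h2 _ (leq_maxr N1 N2)).
  rewrite hnormB (hnormB y).
  have ha := hnorm_ge0 a; have hb := hnorm_ge0 b.
  set e' := e / K => q1 q2.
  have -> : e = K * e' by rewrite /e' mulrC divfK // gt_eqF.
  have := ler_wpM2l ha (ltW q1); have := ler_wpM2l hb (ltW q2).
  have e1' : 0 < e' := e1. rewrite /K. lra.
apply: cext.
  apply: small0 => e e0; have [n hn] := small e e0.
  rewrite (hd n) ReD ReN.
  have := CSabs a (x - u n); have := CSabs b (y - v n).
  have := ler_normB (complex.Re (ip a (x - u n))) (complex.Re (ip b (y - v n))).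
  rewrite /=. lra.
apply: small0 => e e0; have [n hn] := small e e0.
rewrite (hd n) ImD ImN.
have := CSIm a (x - u n); have := CSIm b (y - v n).
have := ler_normB (complex.Im (ip a (x - u n))) (complex.Im (ip b (y - v n))).
rewrite /=. lra.
Qed.
Lemma dense_orth (D : set H) d : dense_set ip D -> (forall z, D z -> ip z d = 0) -> d = 0.
Proof.
move=> hD hz; apply: hnorm_eq0; apply/eqP; apply: contraT => hd0.
have hd : 0 < hnorm ip d by rewrite lt_def hd0 hnorm_ge0.
have [z [Dz hz']] := hD d _ (divr_gt0 hd (ltr0Sn _ 1)).
have e : N2 d = complex.Re (ip (d - z) d).
  by rewrite ipBl (hz z Dz) subr0.
have := CS (d - z) d; rewrite -e -hnorm_sq.
have := hnorm_ge0 (d - z). nra.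
Qed.
End Basics.

Section Closure.
Variables (R : realType) (H : lmodType R[i]) (ip : H -> H -> R[i]).
Hypothesis hip : is_inner_product ip.
Variable T : opr H.

Definition GC x y := exists u : nat -> H, (forall n, dom T (u n)) /\
  converges ip u x /\ converges ip (fun n => app T (u n)) y.

Definition clos : opr H := Opr (fun x => exists y, GC x y) (fun x => xget 0 (GC x)).

Lemma clos_GC x : dom clos x -> GC x (app clos x).
Proof. by move=> h; apply: xgetPex. Qed.

Definition eps (n : nat) : R := (n.+1%:R)^-1.
Lemma eps_gt0 n : 0 < eps n.
Proof. by rewrite invr_gt0 ltr0Sn. Qed.
Lemma eps_small e : 0 < e -> exists N, forall n, (N <= n)%N -> eps n < e.
Proof.
move=> e0; exists (Num.Def.archi_bound e^-1) => n hn.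
have ei : 0 < e^-1 by rewrite invr_gt0.
have h1 := archi_boundP (ltW ei).
have h2 : (Num.Def.archi_bound e^-1)%:R <= n.+1%:R :> R by rewrite ler_nat (leq_trans hn).
rewrite /eps invf_plt ?posrE ?ltr0Sn //.
exact: lt_le_trans h1 h2.
Qed.
Lemma conv_approx (z u : nat -> H) x : (forall n, hnorm ip (z n - u n) < eps n) ->
  converges ip u x -> converges ip z x.
Proof.
move=> hz cu e e0.
have e2 : 0 < e / 2 by rewrite divr_gt0.
have [N1 h1] := cu _ e2; have [N2 h2] := eps_small e2.
exists (maxn N1 N2) => n hn.
have := h1 n (leq_trans (leq_maxl _ _) hn); have := h2 n (leq_trans (leq_maxr _ _) hn).
have := hz n.
have -> : z n - x = (z n - u n) + (u n - x) by rewrite addrA subrK.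
have := hnormD hip (z n - u n) (u n - x). lra.
Qed.

Hypothesis hT : is_operator T.

Lemma GC_dom x : dom T x -> GC x (app T x).
Proof. by move=> hx; exists (fun _ => x); split => //; split; apply: conv_const. Qed.

Lemma GC_lin a x y x' y' : GC x y -> GC x' y' -> GC (a *: x + x') (a *: y + y').
Proof.
move=> [u [Du [cu cTu]]] [w [Dw [cw cTw]]].
exists (fun n => a *: u n + w n); split; first by move=> n; apply: hT.1.2.
split; first exact: conv_add (conv_scale hip a cu) cw.
apply: (conv_ext (u := fun n => a *: app T (u n) + app T (w n))).
  by move=> n; rewrite hT.2.
exact: conv_add (conv_scale hip a cTu) cTw.
Qed.

Lemma GC_closed (u w : nat -> H) x y : (forall n, GC (u n) (w n)) ->
  converges ip u x -> converges ip w y -> GC x y.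
Proof.
move=> hg cu cw.
have : forall n, exists z, dom T z /\ hnorm ip (z - u n) < eps n /\
    hnorm ip (app T z - w n) < eps n.
  move=> n; have [s [Ds [cs cTs]]] := hg n.
  have [N1 h1] := cs _ (eps_gt0 n); have [N2 h2] := cTs _ (eps_gt0 n).
  exists (s (maxn N1 N2)); split => //; split; [apply: h1|apply: h2];
    by rewrite leq_max leqnn ?orbT.
move=> /choice [z hz].
exists z; split; first by move=> n; case: (hz n).
split.
  by apply: (conv_approx (u := u)) => // n; case: (hz n) => _ [].
by apply: (conv_approx (u := w)) => // n; case: (hz n) => _ [].
Qed.

Variable T' : opr H.
Hypothesis hT'd : dense_set ip (dom T').
Hypothesis hadj : forall z u, dom T' z -> dom T u -> ip z (app T u) = ip (app T' z) u.

Lemma GC_unique x y1 y2 : GC x y1 -> GC x y2 -> y1 = y2.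
Proof.
move=> [u [Du [cu cy1]]] [w [Dw [cw cy2]]].
apply/eqP; rewrite -subr_eq0; apply/eqP; apply: (dense_orth hip hT'd) => z Dz.
rewrite (ipBr hip).
have e1 : ip z y1 = ip (app T' z) x := LIM hip cy1 cu (fun n => hadj Dz (Du n)).
have e2 : ip z y2 = ip (app T' z) x := LIM hip cy2 cw (fun n => hadj Dz (Dw n)).
by rewrite e1 e2 subrr.
Qed.

Lemma clos_app x y : GC x y -> dom clos x /\ app clos x = y.
Proof. move=> h; have hd : dom clos x by exists y. split => //. exact: GC_unique (clos_GC hd) h. Qed.

Lemma clos_D x : dom T x -> dom clos x /\ app clos x = app T x.
Proof. by move=> hx; apply: clos_app; apply: GC_dom. Qed.

Lemma clos_is_closure : is_closure ip T clos.
Proof.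
split; last split.
- split.
  + split.
    * split; first by exists (app T 0); apply: GC_dom; exact: hT.1.1.
      move=> a x y hx hy; exists (a *: app clos x + app clos y).
      exact: (GC_lin a (clos_GC hx) (clos_GC hy)).
    * move=> a x y hx hy; exact: (clos_app (GC_lin a (clos_GC hx) (clos_GC hy))).2.
  + move=> u x y hu cu cy; apply: clos_app.
    apply: (GC_closed (u := u) (w := fun n => app clos (u n))) => // n; exact: clos_GC (hu n).
- by split => x hx; have [h1 h2] := clos_D hx.
- move=> x hx; exact: clos_GC hx.
Qed.
End Closure.

Section ClosAdj.
Variables (R : realType) (H : lmodType R[i]) (ip : H -> H -> R[i]).
Hypothesis hip : is_inner_product ip.
Variables T T' : opr H.
Hypothesis hadj' : forall z u, dom T z -> dom T' u -> ip z (app T' u) = ip (app T z) u.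

Lemma clos_adj x y : dom (clos ip T) x -> dom (clos ip T') y ->
  ip x (app (clos ip T') y) = ip (app (clos ip T) x) y.
Proof.
move=> hx hy.
have step1 : forall x0, dom T x0 -> ip x0 (app (clos ip T') y) = ip (app T x0) y.
  move=> x0 hx0; have [v [Dv [cv cTv]]] := clos_GC hy.
  exact: (LIM hip cTv cv (fun n => hadj' hx0 (Dv n))).
have [u [Du [cu cTu]]] := clos_GC hx.
have h : forall n, ip (app (clos ip T') y) (u n) = ip y (app T (u n)).
  by move=> n; rewrite (ipC hip) step1 // -(ipC hip).
have := LIM hip cu cTu h.
by move=> e; rewrite (ipC hip) e -(ipC hip).
Qed.
End ClosAdj.

Section Comb.
Variables (R : realType) (H : lmodType R[i]) (ip : H -> H -> R[i]).
Hypothesis hip : is_inner_product ip.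
Variables (A At : opr H) (D : set H).

Definition comb (c d : R[i]) : opr H := Opr D (fun x => c *: app A x + d *: app At x).

Lemma comb_op c d : is_operator A -> is_operator At -> is_subspace D ->
  (forall x, D x -> dom A x /\ dom At x) -> is_operator (comb c d).
Proof.
move=> hA hAt sD hD; split => // a x y hx hy /=.
have [Ax Atx] := hD x hx; have [Ay Aty] := hD y hy.
rewrite hA.2 // hAt.2 // !scalerDr !scalerA (mulrC c a) (mulrC d a).
by rewrite addrACA.
Qed.

Hypothesis hdual : forall x y, dom A x -> dom At y -> ip x (app At y) = ip (app A x) y.
Hypothesis hD : forall x, D x -> dom A x /\ dom At x.

Lemma dualC x y : D x -> D y -> ip x (app A y) = ip (app At x) y.
Proof.
move=> hx hy; have [Ax Atx] := hD hx; have [Ay Aty] := hD hy.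
by rewrite (ipC hip) -hdual // -(ipC hip).
Qed.

Lemma comb_sym c d : conjc c = d -> conjc d = c ->
  forall x y, D x -> D y -> ip x (app (comb c d) y) = ip (app (comb c d) x) y.
Proof.
move=> hcd hdc x y hx hy /=.
have [Ax Atx] := hD hx; have [Ay Aty] := hD hy.
rewrite (ipDr hip) !(ipZr hip) (ipDl hip) !(ipZl hip) hcd hdc dualC //.
rewrite hdual //. by rewrite addrC.
Qed.

Lemma comb_nonneg x : D x -> 0 <= complex.Im (ip x (app A x)) ->
  0 <= ip x (app (comb (Complex 0 (- 2^-1)) (Complex 0 2^-1)) x).
Proof.
move=> hx; have [Ax Atx] := hD hx.
rewrite /= (ipDr hip) !(ipZr hip) hdual //.
rewrite (ipC hip x (app A x)).
case: (ip x (app A x)) => a b /= hb.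
rewrite lecE /=; apply/andP; split.
  apply/eqP; ring.
lra.
Qed.
End Comb.

Lemma comb_plus (R : realType) (H : lmodType R[i]) (p q r p' q' : R[i]) (f g : H) :
  p *: f + q *: g + r *: (p' *: f + q' *: g) = (p + r * p') *: f + (q + r * q') *: g.
Proof. rewrite scalerDr !scalerA !scalerDl. by rewrite addrACA. Qed.
Lemma comb_minus (R : realType) (H : lmodType R[i]) (p q r p' q' : R[i]) (f g : H) :
  p *: f + q *: g - r *: (p' *: f + q' *: g) = (p - r * p') *: f + (q - r * q') *: g.
Proof. rewrite scalerDr !scalerA !scalerBl opprD. by rewrite addrACA. Qed.

Lemma dense_sub (R : realType) (H : lmodType R[i]) (ip : H -> H -> R[i]) (E D : set H) :
  is_inner_product ip -> dense_set ip E ->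
  (forall y, E y -> exists u : nat -> H, (forall n, D (u n)) /\ converges ip u y) ->
  dense_set ip D.
Proof.
move=> hip hE hED x e e0.
have e2 : 0 < e / 2 by rewrite divr_gt0.
have [y [Ey hy]] := hE x _ e2.
have [u [Du cu]] := hED y Ey.
have [N hN] := cu _ e2.
exists (u N); split => //.
have := hN N (leqnn N).
have -> : x - u N = (x - y) + - (u N - y) by rewrite opprB addrA subrK.
have := hnormD hip (x - y) (- (u N - y)). rewrite (hnormN hip). lra.
Qed.

Lemma self_closure (R : realType) (H : lmodType R[i]) (ip : H -> H -> R[i]) (B : opr H) :
  is_inner_product ip -> closed_op ip B -> is_closure ip B B.
Proof.
move=> hip cB; split => //; split; first by split.
move=> x hx; exists (fun _ => x); split; first by move=> _.
by split; apply: (conv_const hip).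
Qed.

Lemma restr_clos (R : realType) (H : lmodType R[i]) (ip : H -> H -> R[i]) (T B : opr H) :
  is_closure ip T B -> is_closure ip (op_restrict B (dom T)) B.
Proof.
move=> [cB [[iT eT] ap]]; split => //; split; first by split => // x hx /=; apply: iT.
move=> x hx; have [u [Du [cu cTu]]] := ap x hx; exists u; split => //; split => //.
by apply: conv_ext cTu => n /=; rewrite eT.
Qed.

Lemma dense_mono (R : realType) (H : lmodType R[i]) (ip : H -> H -> R[i]) (D E : set H) :
  dense_set ip D -> (forall x, D x -> E x) -> dense_set ip E.
Proof. by move=> hD hDE x e e0; have [y [Dy hy]] := hD x e e0; exists y; split => //; apply: hDE. Qed.

Close Scope complex_scope.
Unset Implicit Arguments. Set Strict Implicit.

Theorem lemma3p3 (R : realType) (H : lmodType R[i]) (ip : H -> H -> R[i]) :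
  is_hilbert ip ->
  (* (a) *)
  (forall (A At : opr H) (D : set H),
      closed_op ip A -> closed_op ip At -> dual_pair ip A At ->
      common_core ip A At D -> dissipative ip A ->
      exists S V : opr H,
        symmetric_op ip S /\ symmetric_op ip V /\ nonneg_op ip V /\
        dom S = D /\ dom V = D /\
        op_eq (op_restrict A D) (op_plus_iV D S V) /\
        op_eq (op_restrict At D) (op_minus_iV D S V)) /\
  (* (b) *)
  (forall S V : opr H,
      symmetric_op ip S -> symmetric_op ip V -> nonneg_op ip V -> dom S = dom V ->
      dissipative ip (op_plus_iV (dom S) S V) ->
      exists Ab Atb : opr H,
        is_closure ip (op_plus_iV (dom S) S V) Ab /\
        is_closure ip (op_minus_iV (dom S) S V) Atb /\
        dual_pair ip Ab Atb /\ common_core_property ip Ab Atb).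
Proof.
move=> [hip _]; split.
- move=> A At D cA cAt [[oA dA] [[oAt dAt] [_ [_ hdual]]]] [sD [hD [clA clAt]]] [_ hdiss].
  have dD : dense_set ip D.
    apply: (dense_sub hip dA) => y Ay.
    by have [u [Du [cu _]]] := clA.2.2 y Ay; exists u.
  pose h : R := 2^-1.
  have c1 : (Complex h 0 + 'i%C * Complex 0 (- h) = 1 :> R[i]).
    apply: cext; rewrite ?ReD ?ImD ?ReM ?ImM /= /h; lra.
  have c2 : (Complex h 0 + 'i%C * Complex 0 h = 0 :> R[i]).
    apply: cext; rewrite ?ReD ?ImD ?ReM ?ImM /= /h; lra.
  have c3 : (Complex h 0 - 'i%C * Complex 0 (- h) = 0 :> R[i]).
    apply: cext; rewrite ?ReD ?ImD ?ReN ?ImN ?ReM ?ImM /= /h; lra.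
  have c4 : (Complex h 0 - 'i%C * Complex 0 h = 1 :> R[i]).
    apply: cext; rewrite ?ReD ?ImD ?ReN ?ImN ?ReM ?ImM /= /h; lra.
  exists (comb A At D (Complex h 0) (Complex h 0)),
         (comb A At D (Complex 0 (- h)) (Complex 0 h)).
  split.
    split; first by split => //; apply: comb_op.
    by apply: (comb_sym hip hdual hD) => /=; rewrite ?oppr0 ?opprK.
  split.
    split; first by split => //; apply: comb_op.
    by apply: (comb_sym hip hdual hD) => /=; rewrite ?oppr0 ?opprK.
  split.
    move=> x hx; apply: (comb_nonneg hip hdual hD hx).
    exact: hdiss (hD x hx).1.
  split => //; split => //.
  split; split; split => // x hx /=.
  + by rewrite comb_plus c1 c2 scale1r scale0r addr0.
  + by rewrite comb_plus c1 c2 scale1r scale0r addr0.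
  + by rewrite comb_minus c3 c4 scale1r scale0r add0r.
  + by rewrite comb_minus c3 c4 scale1r scale0r add0r.
- move=> S V [[oS dS] symS] [[oV dV] symV] nnV eSV _.
  have hDV x : dom S x -> dom V x by rewrite eSV.
  have ci : conjc ('i%C : R[i]) = - 'i%C by apply: cext => /=; rewrite ?oppr0.
  have oT : is_operator (op_plus_iV (dom S) S V).
    split; first exact: oS.1.
    move=> a x y hx hy /=; have hx' := hDV _ hx; have hy' := hDV _ hy.
    rewrite oS.2 // oV.2 //.
    rewrite !scalerDr !scalerA (mulrC 'i%C a).
    by rewrite addrACA.
  have oT' : is_operator (op_minus_iV (dom S) S V).
    split; first exact: oS.1.
    move=> a x y hx hy /=; have hx' := hDV _ hx; have hy' := hDV _ hy.
    rewrite oS.2 // oV.2 //.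
    rewrite !scalerDr !scalerA (mulrC 'i%C a) opprD.
    by rewrite scalerN scalerA addrACA.
  have hadj z u : dom S z -> dom S u ->
      ip z (app (op_plus_iV (dom S) S V) u) = ip (app (op_minus_iV (dom S) S V) z) u.
    move=> hz hu /=; have hz' := hDV _ hz; have hu' := hDV _ hu.
    rewrite (ipDr hip) (ipZr hip) (ipBl hip) (ipZl hip) ci symS // symV //.
    by rewrite mulNr opprK.
  have hadj' z u : dom S z -> dom S u ->
      ip z (app (op_minus_iV (dom S) S V) u) = ip (app (op_plus_iV (dom S) S V) z) u.
    move=> hz hu /=; have hz' := hDV _ hz; have hu' := hDV _ hu.
    rewrite (ipBr hip) (ipZr hip) (ipDl hip) (ipZl hip) ci symS // symV //.
    by rewrite mulNr.
  have clT := clos_is_closure hip oT (T' := op_minus_iV (dom S) S V) dS hadj.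
  have clT' := clos_is_closure hip oT' (T' := op_plus_iV (dom S) S V) dS hadj'.
  exists (clos ip (op_plus_iV (dom S) S V)), (clos ip (op_minus_iV (dom S) S V)).
  split => //; split => //.
  split.
    split; first by split; [exact: clT.1.1 | apply: (@dense_mono _ _ _ (dom S)) => //; exact: clT.2.1.1].
    split; first by split; [exact: clT'.1.1 | apply: (@dense_mono _ _ _ (dom S)) => //; exact: clT'.2.1.1].
    split; first by exists (clos ip (op_plus_iV (dom S) S V)); apply: self_closure => //; exact: clT.1.
    split; first by exists (clos ip (op_minus_iV (dom S) S V)); apply: self_closure => //; exact: clT'.1.
    move=> x y hx hy; exact: (clos_adj hip (T := op_plus_iV (dom S) S V) (T' := op_minus_iV (dom S) S V) hadj' hx hy).
  split; first exact: clT.1.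
  split; first exact: clT'.1.
  exists (dom S); split; first exact: oS.1.
  split; first by move=> x hx; split; [exact: clT.2.1.1 | exact: clT'.2.1.1].
  split; [exact: restr_clos clT | exact: restr_clos clT'].
Qed.
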